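(* Let $\{X_1,X_2,\dots\}$ be a random dense countable subset of $(0,1)$. Suppose that on the same probability space there are random variables $Y_1,Y_2,\dots$ with values in $(0,1)$ such that: - $\{Y_1,Y_2,\dots\}=\{X_1,X_2,\dots\}$ a.s.; - $Y_{2k-1}<\tfrac12$ and $Y_{2k}\ge\tfrac12$ a.s. for all $k$; - the sequence $(Y_2,Y_4,\dots)$ is independent of $(Y_1,Y_3,\dots)$. Suppose moreover that $\Pr(X_1<\tfrac12)>0$. Then for almost all $x_1\in(0,\tfrac12)$ with respect to the distribution of $X_1$, the conditional joint distribution of $(Y_2,Y_4,\dots)$ given $X_1=x_1$ is absolutely continuous with respect to the unconditional joint distribution of $(Y_2,Y_4,\dots)$.
   Context: A random dense countable subset of $(0,1)$ is given by random variables $X_1,X_2,\dots:\Omega\to(0,1)$ such that $\{X_1(\omega),X_2(\omega),\dots\}$ is dense in $(0,1)$ for a.e. $\omega$. *)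

(* Defs.v *)
From HB Require Import structures.
From mathcomp Require Import all_boot all_order all_algebra.
From mathcomp Require Import all_classical all_reals all_analysis.
Set Implicit Arguments. Unset Strict Implicit. Unset Printing Implicit Defensive.
Import Order.TTheory GRing.Theory Num.Theory.
Local Open Scope classical_set_scope.
Local Open Scope ring_scope.

(* The type of real sequences R^N (an alias of nat -> R, made a pointedType
   so that a sigma-algebra can be put on it). *)
Definition Rseq (R : realType) := (nat -> R)%type.
HB.instance Definition _ (R : realType) := gen_eqMixin (Rseq R).
HB.instance Definition _ (R : realType) := gen_choiceMixin (Rseq R).
HB.instance Definition _ (R : realType) := isPointed.Build (Rseq R) (fun _ => 0).

Definition cylinders (R : realType) : set (set (Rseq R)) :=
  [set C | exists (n : nat) (A : set R),
     measurable A /\ C = (fun f : Rseq R => f n) @^-1` A].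

Definition seqspace (R : realType) := g_sigma_algebraType (@cylinders R).

Definition dense_in_01 (R : realType) (x : nat -> R) : Prop :=
  forall a b : R, 0 <= a -> a < b -> b <= 1 -> exists n, a < x n < b.

Definition indep_seq d (Omega : measurableType d) (R : realType)
    (P : probability Omega R) (U V : Omega -> seqspace R) : Prop :=
  forall A B : set (seqspace R), measurable A -> measurable B ->
    P (U @^-1` A `&` V @^-1` B) = (P (U @^-1` A) * P (V @^-1` B))%E.

(* k is a (regular) conditional distribution of V given the real random
   variable X: a probability kernel such that for all Borel A and all
   measurable B, P(X in A, V in B) = int_A k(x, B) dP_X(x). *)
Definition is_cond_distr d (Omega : measurableType d) (R : realType)
    (P : probability Omega R) (X : {RV P >-> R}) (V : Omega -> seqspace R)
    (k : R.-pker R ~> seqspace R) : Prop :=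
  forall (A : set R) (B : set (seqspace R)), measurable A -> measurable B ->
    P (X @^-1` A `&` V @^-1` B) =
    (\int[distribution P X]_(x in A) k x B)%E.

(* Main.v *)
Require Import Defs.
From HB Require Import structures.
From mathcomp Require Import all_boot all_order all_algebra.
From mathcomp Require Import all_classical all_reals all_analysis.
From mathcomp Require Import measurable_realfun.
Import Order.TTheory GRing.Theory Num.Theory.
Local Open Scope classical_set_scope.
Local Open Scope ring_scope.
Set Implicit Arguments. Unset Strict Implicit. Unset Printing Implicit Defensive.

Section gen.
Variable R : realType.

Definition Gs (s : seq (nat * rat)) : set (Rseq R) :=
  [set f | all (fun p => f p.1 < ratr p.2) s].

Lemma Gs_cat s t : Gs s `&` Gs t = Gs (s ++ t).
Proof. by apply/seteqP; split => f /=; rewrite /Gs /= all_cat => /andP. Qed.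

Lemma Gs_nil : Gs [::] = setT.
Proof. by apply/seteqP; split => f. Qed.

Lemma Gs_measurable s : measurable (Gs s : set (seqspace R)).
Proof.
elim: s => [|p s IH]; first by rewrite Gs_nil; exact: measurableT.
rewrite -cat1s -Gs_cat; apply: measurableI => //.
apply: sub_sigma_algebra; exists p.1, `]-oo, ratr p.2[%classic; split => //.
by apply/seteqP; split => f /=; rewrite /Gs /= andbT in_itv.
Qed.

Lemma seqspace_gen : @measurable _ (seqspace R) = <<s range Gs >>.
Proof.
apply/seteqP; split; last first.
  apply: smallest_sub; first exact: sigma_algebra_measurable.
  by move=> _ [s _ <-]; exact: Gs_measurable.
apply: smallest_sub; first exact: smallest_sigma_algebra.
move=> _ [n [A [mA ->]]].
pose T' := g_sigma_algebraType (range Gs).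
have mp : measurable_fun [set: T'] (fun f : T' => f n : R).
  apply: (measurability _ (RGenInftyO.measurableE R)).
  move=> _ [_ [x ->] <-].
  rewrite setTI.
  have -> : (fun f : T' => f n) @^-1` `]-oo, x[ =
     \bigcup_(q : rat) (if ratr q < x then Gs [:: (n, q)] else set0).
    apply/seteqP; split => f /=.
      rewrite in_itv /= => fx.
      have [q] := rat_in_itvoo fx; rewrite in_itv /= => /andP[fq qx].
      by exists q => //; rewrite qx /Gs /= fq.
    move=> [q _]; case: ifPn => // qx; rewrite /Gs /= andbT => fq.
    by rewrite in_itv /= (lt_trans fq qx).
  apply: bigcupT_measurable_rat => q; case: ifPn => _; last exact: measurable0.
  by apply: sub_sigma_algebra; exists [:: (n, q)].
have := mp measurableT _ mA; rewrite setTI; exact.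
Qed.

Lemma Gs_setI : setI_closed (range Gs).
Proof. by move=> _ _ [s _ <-] [t _ <-]; rewrite Gs_cat; exists (s ++ t). Qed.

End gen.


Section mr.
Local Open Scope ereal_scope.
Context (R : realType) d' (T : measurableType d')
  (m : {finite_measure set T -> \bar R}) (H : set T) (mH : measurable H).
Definition mr := mrestr m mH.
HB.instance Definition _ := Measure.on mr.
Lemma mr_fin : fin_num_fun mr.
Proof.
move=> A mA; rewrite ge0_fin_numE ?measure_ge0 //.
apply: (@le_lt_trans _ _ (m A)).
  by rewrite /mr /mrestr le_measure ?inE //; exact: measurableI.
by have := fin_num_measure m A mA; rewrite fin_numElt => /andP[_ ->].
Qed.
HB.instance Definition _ := Measure_isFinite.Build _ _ _ mr mr_fin.
Lemma mr_dom : mr `<< m.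
Proof.
move=> N N0 A mA AN; apply/eqP; rewrite eq_le measure_ge0 andbT -(N0 A mA AN).
by rewrite /mr /mrestr le_measure ?inE //; exact: measurableI.
Qed.
Let rn := Radon_Nikodym_SigmaFinite.f mr m.
Lemma rn_ae : ae_eq m setT rn (fun x => (\1_H x)%:E).
Proof.
apply: integral_ae_eq => //.
- exact: Radon_Nikodym_SigmaFinite.f_integrable mr_dom.
- by apply/measurable_EFinP; exact: measurable_indic.
- move=> E _ mE; rewrite -(Radon_Nikodym_SigmaFinite.f_integral mr_dom) //.
  by rewrite integral_indic // setIC.
Qed.
Lemma integral_mr A (f : T -> \bar R) : measurable A -> (forall x, 0 <= f x) ->
  measurable_fun setT f ->
  \int[mrestr m mH]_(x in A) f x = \int[m]_(x in A `&` H) f x.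
Proof.
move=> mA f0 mf; change (\int[mr]_(x in A) f x = \int[m]_(x in A `&` H) f x).
rewrite -(Radon_Nikodym_SigmaFinite.change_of_variables mr_dom f0 mA); last first.
  exact: measurable_funS mf.
rewrite integral_mkcondr; apply: ae_eq_integral => //.
- apply: emeasurable_funM; first exact: measurable_funS mf.
  apply: measurable_funTS; apply: measurable_int.
  exact: Radon_Nikodym_SigmaFinite.f_integrable mr_dom.
- apply: measurable_funTS; apply/(measurable_restrictT f mH).
  exact: measurable_funS mf.
- apply: filterS rn_ae => x rx Ax.
  transitivity (f x * (\1_H x)%:E); first by congr (_ * _); exact: rx.
  rewrite /patch indicE.
  by case: (x \in H); rewrite ?mule1 ?mule0.
Qed.
End mr.

Section main.
Variables (R : realType) (d : measure_display) (Omega : measurableType d)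
  (P : probability Omega R) (X Y : nat -> {RV P >-> R}).
Local Notation S := (seqspace R).

Lemma seqof_mfun (Z : nat -> {RV P >-> R}) :
  measurable_fun [set: Omega] ((fun w j => Z j w) : Omega -> S).
Proof.
apply: (@measurability _ _ Omega S setT _ (@cylinders R) erefl).
move=> _ [_ [n [A [mA ->]]] <-]; rewrite setTI.
have := @measurable_funP _ _ _ _ setT (Z n) measurableT _ mA.
by rewrite setTI.
Qed.

Definition Vf : Omega -> S := fun w j => Y (2 * j).+1 w.
Definition Uf : Omega -> S := fun w j => Y (2 * j)%N w.
Lemma mVf : measurable_fun setT Vf.
Proof. exact: (seqof_mfun (fun j => Y (2 * j).+1)). Qed.
Lemma mUf : measurable_fun setT Uf.
Proof. exact: (seqof_mfun (fun j => Y (2 * j)%N)). Qed.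
HB.instance Definition _ := isMeasurableFun.Build _ _ _ _ Vf mVf.
HB.instance Definition _ := isMeasurableFun.Build _ _ _ _ Uf mUf.

Definition pXV : Omega -> (R * S)%type := fun w => (X 0%N w, Vf w).
Lemma mpXV : measurable_fun setT pXV.
Proof. by apply: measurable_fun_pair => //; exact: mVf. Qed.
HB.instance Definition _ := isMeasurableFun.Build _ _ _ _ pXV mpXV.

Definition pUV (n : nat) : Omega -> (R * S)%type := fun w => (Y (2 * n)%N w, Vf w).
Lemma mpUV n : measurable_fun setT (pUV n).
Proof. by apply: measurable_fun_pair => //; exact: mVf. Qed.
HB.instance Definition _ n := isMeasurableFun.Build _ _ _ _ (pUV n) (mpUV n).

Definition lam := distribution P Vf.

Definition wt (n : nat) : {nonneg R}.
Proof. refine (@NngNum R (1 / (2 ^ (n + 1))%:R) _). by rewrite divr_ge0. Defined.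

Definition nuseq (n : nat) := mscale (wt n) (distribution P (Y (2 * n)%N)).
Definition nu := mseries nuseq 0.

Lemma nuT : nu setT = 1%E.
Proof.
rewrite /nu /mseries.
transitivity (\sum_(0 <= k <oo) ((1 / (2 ^ (k + 1))%:R : R)%:E))%E.
  apply: eq_eseriesr => k _; rewrite /nuseq /mscale /=.
  unfold mscale; transitivity ((wt k)%:num%:E * 1)%E; last by rewrite mule1.
  by congr (_ * _)%E; exact: probability_setT.
apply: cvg_lim => //.
have := @cvg_geometric_eseries_half R 1 0.
by rewrite expr0 divr1.
Qed.

Lemma fin_le1 d' (T : measurableType d') (m : {measure set T -> \bar R}) :
  (m setT <= 1)%E -> fin_num_fun m.
Proof.
move=> m1 A mA; rewrite ge0_fin_numE ?measure_ge0//.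
apply: (le_lt_trans _ (ltry 1)); apply: le_trans m1.
by apply: le_measure; rewrite ?inE.
Qed.

HB.instance Definition _ := Measure.on nu.
Lemma nu_le1 : (nu setT <= 1)%E. Proof. by rewrite nuT. Qed.
HB.instance Definition _ := Measure_isFinite.Build _ _ _ nu (fin_le1 nu_le1).

Definition H12 : set R := `]-oo, 2^-1[%classic.
Lemma mH12 : measurable H12. Proof. exact: measurable_itv. Qed.
Definition E12 : set (R * S)%type := H12 `*` setT.
Lemma mE12 : measurable E12. Proof. exact: measurableX mH12 measurableT. Qed.

Definition mu' := mrestr (distribution P pXV) mE12.
HB.instance Definition _ := Measure.on mu'.
Lemma mu'_le1 : (mu' setT <= 1)%E.
Proof.
rewrite /mu' /mrestr setTI -(@probability_setT _ _ _ (distribution P pXV)).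
by apply: le_measure; rewrite ?inE //; exact: mE12.
Qed.
HB.instance Definition _ := Measure_isFinite.Build _ _ _ mu' (fin_le1 mu'_le1).

Definition beta := mrestr (distribution P (X 0%N)) mH12.
HB.instance Definition _ := Measure.on beta.
Lemma beta_le1 : (beta setT <= 1)%E.
Proof.
rewrite /beta /mrestr setTI -(@probability_setT _ _ _ (distribution P (X 0%N))).
by apply: le_measure; rewrite ?inE //; exact: mH12.
Qed.
HB.instance Definition _ := Measure_isFinite.Build _ _ _ beta (fin_le1 beta_le1).

Definition rho := (nu \x lam)%E.
HB.instance Definition _ := Measure.on rho.
Lemma rho_le1 : (rho setT <= 1)%E.
Proof.
rewrite /rho -setXTT product_measure1E //.
rewrite [X in (X * _)%E](_ : _ = 1%E); last exact: nuT.
rewrite [X in (_ * X)%E](_ : _ = 1%E); last exact: probability_setT.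
by rewrite mule1.
Qed.
HB.instance Definition _ := Measure_isFinite.Build _ _ _ rho (fin_le1 rho_le1).

Definition h := Radon_Nikodym_SigmaFinite.f mu' rho.
Definition g := Radon_Nikodym_SigmaFinite.f beta nu.


Hypothesis Hrange :
  {ae P, forall w, range (fun n => Y n w) = range (fun n => X n w)}.
Hypothesis Hodd : forall j, {ae P, forall w, 2^-1 <= Y (2 * j).+1 w}.
Hypothesis Hind : indep_seq P Vf Uf.

Lemma law_pUV n C : measurable C ->
  ((distribution P (Y (2 * n)%N)) \x lam)%E C = distribution P (pUV n) C.
Proof.
move=> mC; apply: product_measure_unique => // A B mA mB.
change (P (pUV n @^-1` (A `*` B)) = (P (Y (2 * n)%N @^-1` A) * P (Vf @^-1` B))%E).
have -> : pUV n @^-1` (A `*` B) =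
    Vf @^-1` B `&` Uf @^-1` ((fun f : S => f n) @^-1` A).
  by apply/seteqP; split => w /= [].
rewrite Hind //; last first.
  by apply: sub_sigma_algebra; exists n, A.
by rewrite muleC.
Qed.

Lemma wt_gt0 n : (0 < (wt n)%:num)%R.
Proof. by rewrite /= divr_gt0. Qed.

Lemma rho_series C : measurable C ->
  rho C = (\sum_(0 <= n <oo) ((wt n)%:num%:E * distribution P (pUV n) C))%E.
Proof.
move=> mC; rewrite /rho /product_measure1 /nu.
rewrite ge0_integral_measure_series //; last first.
  exact: measurable_fun_xsection.
apply: eq_eseriesr => n _.
rewrite /nuseq ge0_integral_mscale //; last exact: measurable_fun_xsection.
by rewrite -law_pUV.
Qed.


Lemma good_ae : {ae P, forall w, range (fun n => Y n w) = range (fun n => X n w)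
   /\ forall j, 2^-1 <= Y (2 * j).+1 w}.
Proof.
have H2 := ae_foralln Hodd.
near=> w; split; [near: w; exact: Hrange | near: w; exact: H2].
Unshelve. all: by end_near.
Qed.

Lemma mu'_dom0 C : measurable C -> rho C = 0%E -> mu' C = 0%E.
Proof.
move=> mC; rewrite rho_series // => rho0.
have term0 n : distribution P (pUV n) C = 0%E.
  have t0 : ((wt n)%:num%:E * distribution P (pUV n) C = 0)%E.
    apply/eqP; rewrite eq_le mule_ge0 // andbT -rho0.
    apply: le_trans (nneseries_lim_ge n.+1 _); last first.
      by move=> i _ _; rewrite mule_ge0.
    rewrite big_nat_recr //=; rewrite leeDr //.
    by rewrite sume_ge0 // => i _; rewrite mule_ge0.
  move/eqP: t0; rewrite mule_eq0 eqe (negbTE (lt0r_neq0 (wt_gt0 n))) /=.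
  by move/eqP.
have [N [mN N0 sN]] := good_ae.
have mA0 : measurable (pXV @^-1` (C `&` E12)).
  by rewrite -[X in measurable X]setTI; apply: mpXV => //; exact: measurableI mC mE12.
change (P (pXV @^-1` (C `&` E12)) = 0%E).
apply/negligibleP => //.
apply: (@negligibleS _ _ _ P (N `|` \bigcup_n (pUV n @^-1` C))).
  move=> w [Cw Ew]; case: (pselect (N w)) => Nw; [by left|right].
  have [rg od] : range (fun n => Y n w) = range (fun n => X n w)
      /\ forall j, 2^-1 <= Y (2 * j).+1 w.
    by apply: contra_notP Nw => ngood; apply: sN.
  have : range (fun n => X n w) (X 0%N w) by exists 0%N.
  rewrite -rg => -[m _ Ym].
  have Xlt : X 0%N w < 2^-1 by move: Ew => [] /=; rewrite /H12 /= in_itv /= => ->.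
  rewrite -(odd_double_half m) in Ym; move: Ym; case: (odd m) => Ym.
    have e : (2 * m./2).+1 = (true + (m./2).*2)%N by rewrite add1n -muln2 mulnC.
    have := od m./2; rewrite e Ym => /(lt_le_trans Xlt).
    by rewrite ltxx.
  have e : (2 * m./2)%N = (false + (m./2).*2)%N by rewrite add0n -muln2 mulnC.
  exists m./2 => //; rewrite /pUV /= e Ym.
  done.
apply: negligibleU; first by exists N; split.
apply: negligible_bigcup => n; apply/negligibleP; last exact: term0.
by rewrite -[X in measurable X]setTI; exact: mpUV.
Qed.

Lemma mu'_dom : mu' `<< rho.
Proof.
by move=> N N0 A mA AN; apply: mu'_dom0 => //; exact: N0.
Qed.

Lemma beta_dom : beta `<< nu.
Proof.
move=> N N0 A mA AN.
have nA : nu A = 0%E := N0 A mA AN.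
have r0 : rho (A `*` setT) = 0%E.
  rewrite /rho product_measure1E //.
  by rewrite [X in (X * _)%E](_ : _ = 0%E) ?mul0e.
have := mu'_dom0 (measurableX mA measurableT) r0.
change (P (pXV @^-1` ((A `*` setT) `&` E12)) = 0%E ->
        P (X 0%N @^-1` (A `&` H12)) = 0%E).
suff -> : pXV @^-1` ((A `*` setT) `&` E12) = X 0%N @^-1` (A `&` H12) by [].
by apply/seteqP; split => w /=; rewrite /E12 /=; tauto.
Qed.


Variable k : R.-pker R ~> S.
Hypothesis Hk : is_cond_distr (X 0%N) Vf k.

Lemma h_ge0 z : (0 <= h z)%E.
Proof. exact: Radon_Nikodym_SigmaFinite.f_ge0 mu'_dom z. Qed.
Lemma mh : measurable_fun setT h.
Proof. exact: measurable_int (Radon_Nikodym_SigmaFinite.f_integrable mu'_dom). Qed.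
Lemma h_int C : measurable C -> mu' C = (\int[rho]_(z in C) h z)%E.
Proof. by move=> mC; exact: (Radon_Nikodym_SigmaFinite.f_integral mu'_dom mC). Qed.

Definition F (B : set S) (x : R) := (\int[lam]_(y in B) h (x, y))%E.

Lemma mhAB (C : set (R * S)%type) : measurable C -> measurable_fun setT (h \_ C).
Proof. by move=> mC; apply/(measurable_restrictT h mC); exact: measurable_funS mh. Qed.
Lemma hAB_ge0 (C : set (R * S)%type) z : (0 <= (h \_ C) z)%E.
Proof. by rewrite /patch; case: ifP => // _; exact: h_ge0. Qed.

Lemma fubini_rect A B : measurable A -> measurable B ->
  (\int[rho]_(z in A `*` B) h z = \int[nu]_(x in A) F B x)%E.
Proof.
move=> mA mB; rewrite integral_mkcond /rho.
rewrite fubini_tonelli1 //; last 2 first.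
  - exact: mhAB (measurableX mA mB).
  - exact: hAB_ge0.
rewrite [RHS]integral_mkcond; congr (integral _ _ _); apply/funext => x.
rewrite /fubini_F /patch /=; case: (boolP (x \in A)) => xA.
  rewrite /F [RHS]integral_mkcond; congr (integral _ _ _); apply/funext => y.
  by rewrite /patch in_setX xA.
by apply: integral0_eq => y _; rewrite in_setX (negbTE xA).
Qed.

Lemma mF B : measurable B -> measurable_fun setT (F B).
Proof.
move=> mB.
have -> : F B = fubini_F lam (h \_ (setT `*` B)).
  apply/funext => x; rewrite /F /fubini_F [LHS]integral_mkcond.
  by congr (integral _ _ _); apply/funext => y; rewrite /patch in_setX in_setT.
apply: measurable_fun_fubini_tonelli_F; first exact: mhAB (measurableX measurableT mB).
exact: hAB_ge0.
Qed.


Lemma g_ge0 x : (0 <= g x)%E.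
Proof. exact: Radon_Nikodym_SigmaFinite.f_ge0 beta_dom x. Qed.
Lemma mg : measurable_fun setT g.
Proof. exact: measurable_int (Radon_Nikodym_SigmaFinite.f_integrable beta_dom). Qed.
Lemma g_int A : measurable A -> beta A = (\int[nu]_(x in A) g x)%E.
Proof. by move=> mA; exact: (Radon_Nikodym_SigmaFinite.f_integral beta_dom mA). Qed.

Lemma cond_eq A B : measurable A -> measurable B ->
  (\int[nu]_(x in A) (k x B * g x) = \int[nu]_(x in A) F B x)%E.
Proof.
move=> mA mB.
have k0 : forall x, (0 <= k x B)%E by move=> x; exact: measure_ge0.
have mk : measurable_fun setT (fun x => k x B) by exact: measurable_kernel.
rewrite /g (Radon_Nikodym_SigmaFinite.change_of_variables beta_dom k0 mA); last first.
  exact: measurable_funS mk.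
rewrite /beta integral_mr //.
rewrite -Hk //; last exact: measurableI mA mH12.
transitivity (mu' (A `*` B)).
  change (P (X 0%N @^-1` (A `&` H12) `&` Vf @^-1` B) =
          P (pXV @^-1` ((A `*` B) `&` E12))).
  by congr (P _); apply/seteqP; split => w /=; rewrite /E12 /=; tauto.
by rewrite h_int ?fubini_rect //; exact: measurableX.
Qed.


Definition dens (x : R) (B : set S) :=
  (\int[lam]_(y in B) (h (x, y) * ((fine (g x))^-1)%:E))%E.

Lemma dens_int_ge0 x y : (0 <= h (x, y) * ((fine (g x))^-1)%:E)%E.
Proof. by rewrite mule_ge0 ?h_ge0 // lee_fin invr_ge0 fine_ge0 ?g_ge0. Qed.
Lemma dens_int_m x : measurable_fun setT (fun y => h (x, y) * ((fine (g x))^-1)%:E)%E.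
Proof. by apply: emeasurable_funM => //; exact: measurable_fun_pair2 mh. Qed.

Let dens0 x : dens x set0 = 0%E.
Proof. exact: integral_set0. Qed.
Let dens_ge0 x B : (0 <= dens x B)%E.
Proof. by rewrite /dens; apply: integral_ge0 => y _; exact: dens_int_ge0. Qed.
Let dens_sa x : semi_sigma_additive (dens x).
Proof.
move=> U mU tU mUU; rewrite /dens ge0_integral_bigcup //; last 2 first.
  - exact: measurable_funTS (dens_int_m x).
  - by move=> y _; exact: dens_int_ge0.
apply: is_cvg_nneseries => n _ _; apply: integral_ge0 => y _; exact: dens_int_ge0.
Qed.
HB.instance Definition _ x := isMeasure.Build _ _ _ (dens x) (dens0 x)
  (dens_ge0 x) (@dens_sa x).


Lemma kB_le1 x B : measurable B -> (k x B <= 1)%E.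
Proof.
move=> mB; rewrite -(@prob_kernel _ _ _ _ _ k x).
by apply: le_measure; rewrite ?inE.
Qed.

Lemma ae_B B : measurable B ->
  ae_eq nu setT (fun x => k x B * g x)%E (F B).
Proof.
move=> mB.
have k0 : forall x, (0 <= k x B)%E by move=> x; exact: measure_ge0.
have mk : measurable_fun setT (fun x => k x B) by exact: measurable_kernel.
apply: integral_ae_eq => //.
- apply: (Radon_Nikodym_SigmaFinite.integrableM beta_dom k0 measurableT).
  apply: (@le_integrable _ _ _ beta setT _ _ (EFin \o cst 1%R)) => //.
    move=> x _; suff : (`|k x B| <= `|(1%:E : \bar R)|)%E by [].
    rewrite gee0_abs // gee0_abs ?lee_fin //; exact: kB_le1.
  exact: finite_measure_integrable_cst.
- exact: mF.
- by move=> E _ mE; exact: cond_eq.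
Qed.

Definition Bn (n : nat) : set S :=
  if @unpickle (seq (nat * rat)) n is Some s then Gs s else setT.
Lemma mBn n : measurable (Bn n).
Proof. by rewrite /Bn; case: unpickle => [s|]; [exact: Gs_measurable|exact: measurableT]. Qed.
Lemma Bn_pickle s : Bn (pickle s) = Gs s.
Proof. by rewrite /Bn pickleK. Qed.

Lemma ae_all : {ae nu, forall x, forall n, (k x (Bn n) * g x)%E = F (Bn n) x}.
Proof.
apply: ae_foralln => n; apply: filterS (ae_B (mBn n)) => x; exact.
Qed.

Lemma ac_point x : (forall n, (k x (Bn n) * g x)%E = F (Bn n) x) ->
  g x != 0%E -> k x `<< lam.
Proof.
move=> Hx gx0.
have gfin : g x \is a fin_num by exact: Radon_Nikodym_SigmaFinite.f_fin_num beta_dom x.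
set c := fine (g x).
have gE : g x = c%:E by rewrite fineK.
have c0 : (0 < c)%R.
  by rewrite lt0r -lee_fin -gE g_ge0 andbT -(@eqe R) -gE.
have eqm : forall B, measurable B -> k x B = dens x B.
  move=> B mB.
  apply: (@measure_unique _ R S (range (@Gs R)) (fun _ => setT) (@seqspace_gen R)
    (@Gs_setI R) _ _ (k x) (dens x)) => //.
  - by move=> _; exists [::] => //; exact: Gs_nil.
  - by rewrite bigcup_const //; exists 0%N.
  - move=> _ [s _ <-]; have := Hx (pickle s); rewrite Bn_pickle => e.
    change (k x (Gs s) = \int[lam]_(y in Gs s) (h (x, y) * ((fine (g x))^-1)%:E))%E.
    rewrite ge0_integralZr; try solve [exact: Gs_measurable
      | exact: measurable_funTS (measurable_fun_pair2 _ mh)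
      | by move=> y _; exact: h_ge0 | by rewrite lee_fin invr_ge0 ltW].
    rewrite -/(F (Gs s) x) -e gE -muleA -EFinM divff ?gt_eqF // mule1 //.
  - by move=> _; rewrite (@prob_kernel _ _ _ _ _ k x) ltry.
move=> N N0 A mA AN; rewrite eqm //.
apply: null_set_integral => //; last exact: N0.
exact: measurable_funTS (dens_int_m x).
Qed.


Lemma main_ae : {ae distribution P (X 0%N), forall x, 0 < x < 2^-1 -> k x `<< lam}.
Proof.
have [N [mN N0 sN]] := ae_all.
pose Z := g @^-1` [set 0%E].
have mZ : measurable Z.
  by rewrite -[Z]setTI; apply: mg => //; exact: emeasurable_set1.
exists ((N `|` Z) `&` H12); split.
- apply: measurableI; first exact: measurableU.
  exact: mH12.
- change (beta (N `|` Z) = 0%E).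
  have bN : beta N = 0%E.
    have := beta_dom ((measure0_null_setP _ mN).2 N0).
    by move=> /(_ N mN (@subset_refl _ N)).
  have bZ : beta Z = 0%E.
    by rewrite g_int //; apply: integral0_eq => x Zx.
  apply/eqP; rewrite eq_le measure_ge0 andbT.
  have hU : (beta (N `|` Z) <= beta N + beta Z)%E := measureU2 beta mN mZ.
  by rewrite bN bZ adde0 in hU.
- move=> x /= /not_implyP[xr nac]; split; last first.
    by rewrite /H12 /= in_itv /=; case/andP: xr.
  case: (pselect (N x)) => Nx; [by left|right].
  rewrite /Z /=; apply: contra_notP nac => gx0.
  apply: ac_point; last by apply/eqP.
  by apply: contra_notP Nx => nQ; apply: sN.
Qed.

End main.

Unset Implicit Arguments.

(* Indexing is 0-based: X n is X_{n+1}, Y n is Y_{n+1}.  Hence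
   Y_{2k-1} = Y (2j), Y_{2k} = Y (2j+1) (j = k-1), X_1 = X 0. *)
Theorem proposition5p2 (R : realType) (d : measure_display)
    (Omega : measurableType d) (P : probability Omega R)
    (X Y : nat -> {RV P >-> R}) :
  (forall n w, 0 < X n w < 1) ->
  {ae P, forall w, dense_in_01 (fun n => X n w)} ->
  (forall n w, 0 < Y n w < 1) ->
  {ae P, forall w, range (fun n => Y n w) = range (fun n => X n w)} ->
  (forall j, {ae P, forall w, Y (2 * j)%N w < 2^-1}) ->
  (forall j, {ae P, forall w, 2^-1 <= Y (2 * j).+1 w}) ->
  indep_seq P (fun w => (fun j => Y (2 * j).+1 w) : seqspace R)
              (fun w => (fun j => Y (2 * j)%N w) : seqspace R) ->
  (0 < P [set w | (X 0%N w < 2^-1)%R])%E ->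
  forall k : R.-pker R ~> seqspace R,
    is_cond_distr (X 0%N) (fun w => (fun j => Y (2 * j).+1 w) : seqspace R) k ->
    {ae distribution P (X 0%N), forall x, 0 < x < 2^-1 ->
       k x `<< pushforward P (fun w => (fun j => Y (2 * j).+1 w) : seqspace R)}.
Proof.
move=> _ _ _ Hr _ Ho Hi _ k Hk.
exact: (@main_ae R d Omega P X Y Hr Ho Hi k Hk).
Qed.
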